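(* Let $f$ be an LLD meromorphic function on $\mathbb{C}$ whose divisor $\mathrm{Div}(f)=\sum_\rho n_\rho(f)\cdot(\rho)$ has exponent of convergence $\alpha>0$. Let $D$ be the divisor $D=-\sum_\rho\sum_{k\ge0} n_\rho(f)\cdot(\rho-k)$, i.e. $n_\rho(D)=-\sum_{k\ge 0} n_{\rho+k}(f)$. Then $D$ is LLD and has exponent of convergence $\alpha+1$.
   Context: $\mathbb{C}_+=\{\Re s>0\}$; $n_\rho(h)$ denotes the order of the meromorphic function $h$ at $\rho$ (positive for zeros, negative for poles), and $\mathrm{Div}(h)=\sum_\rho n_\rho(h)\cdot(\rho)$. A function is LLD if it has no zeros nor poles in $\mathbb{C}_+$; a divisor is LLD if its support lies in $\{\Re s\le 0\}$. A divisor $D=\sum_\rho n_\rho\cdot(\rho)$ has exponent of convergence $\alpha>0$ if $\|D\|_\alpha=\sum_{\rho\neq0}|n_\rho|\,|\rho|^{-\alpha}<+\infty$. (Note $n_{\rho+k}(f)=0$ once $\rho+k\in\mathbb{C}_+$, so the sums defining $n_\rho(D)$ are finite.) *)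

(* Defs.v *)
From Stdlib Require Import Reals ZArith List ClassicalEpsilon.
From Coquelicot Require Import Coquelicot.
Open Scope R_scope.

Definition C_differentiable_at (g : C -> C) (z : C) : Prop :=
  exists L : C, forall eps : R, 0 < eps -> exists delta : R, 0 < delta /\
    forall w : C, 0 < Cmod (w - z) < delta ->
      Cmod (g w - g z - L * (w - z)) <= eps * Cmod (w - z).

Definition holomorphic_on_disc (g : C -> C) (c : C) (r : R) : Prop :=
  forall z : C, Cmod (z - c) < r -> C_differentiable_at g z.

(* h has order n at rho: near rho (rho excluded), h(z) = (z-rho)^n g(z) with
   g holomorphic near rho and g(rho) <> 0.  For n = k - m (k, m : nat) this is
   written without negative powers as h(z) (z-rho)^m = (z-rho)^k g(z). *)
Definition has_order (h : C -> C) (rho : C) (n : Z) : Prop :=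
  exists r : R, 0 < r /\ exists g : C -> C,
    holomorphic_on_disc g rho r /\ g rho <> 0%C /\
    exists k m : nat, n = (Z.of_nat k - Z.of_nat m)%Z /\
      forall z : C, 0 < Cmod (z - rho) < r ->
        (h z * Cpow (z - rho) m = Cpow (z - rho) k * g z)%C.

(* (nonzero) meromorphic function on C: it has an order at every point.
   The values of h at its poles are irrelevant (never used). *)
Definition meromorphic (h : C -> C) : Prop :=
  forall rho : C, exists n : Z, has_order h rho n.

(* n_rho(h): the order of h at rho (well defined for meromorphic h, since the
   order is unique). *)
Definition ord (h : C -> C) (rho : C) : Z :=
  epsilon (inhabits 0%Z) (has_order h rho).

Definition divisor := C -> Z.
Definition Div (h : C -> C) : divisor := ord h.

Definition LLD_fun (h : C -> C) : Prop :=
  forall rho : C, 0 < Re rho -> ord h rho = 0%Z.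
Definition LLD_div (D : divisor) : Prop :=
  forall rho : C, D rho <> 0%Z -> Re rho <= 0.

(* ||D||_alpha = sum_{rho <> 0} |n_rho| |rho|^(-alpha) < +oo, as an unordered
   sum of nonnegative terms: all finite partial sums are bounded. *)
Definition has_exponent_of_convergence (D : divisor) (alpha : R) : Prop :=
  exists M : R, forall l : list C, NoDup l -> (forall rho, In rho l -> rho <> 0%C) ->
    fold_right Rplus 0
      (map (fun rho => IZR (Z.abs (D rho)) / Rpower (Cmod rho) alpha) l) <= M.

(* For an LLD f the terms vanish as
   soon as Re(rho) + k > 0, i.e. for k >= up(-Re rho); we sum k = 0..N(rho)
   with N(rho) = Z.to_nat (up (- Re rho)), which covers all possibly nonzero
   terms. *)
Definition shift_bound (rho : C) : nat := Z.to_nat (up (- Re rho)).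
Definition shifted_divisor (n : divisor) : divisor :=
  fun rho => (- fold_right Z.add 0%Z
                  (map (fun k : nat => n (rho + RtoC (INR k))%C)
                       (seq 0 (S (shift_bound rho)))))%Z.

(* Main.v *)
Require Import Defs.
From Stdlib Require Import Reals ZArith List.
From Coquelicot Require Import Coquelicot.
From Stdlib Require Import Reals ZArith List FinFun Lra Lia.
From Coquelicot Require Import Coquelicot.
Open Scope R_scope.

Lemma exp_le_mono x y : x <= y -> exp x <= exp y.
Proof. intros [H|H]; [left; apply exp_increasing; auto | subst; lra]. Qed.

Lemma inv_exp t : / exp t = exp (- t).
Proof. rewrite exp_Ropp; reflexivity. Qed.

Lemma bernoulli (a x : R) : 0 < a -> 0 < x ->
  a * / Rpower (x + 1) (a + 1) + / Rpower (x + 1) a <= / Rpower x a.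
Proof.
  intros Ha Hx. unfold Rpower.
  set (u := ln x). set (v := ln (x + 1)).
  assert (Eu : exp u = x) by (apply exp_ln; lra).
  assert (Ev : exp v = x + 1) by (apply exp_ln; lra).
  rewrite !inv_exp.
  assert (E1 : exp (- ((a + 1) * v)) = exp (- (a * v)) * exp (- v))
    by (rewrite <- exp_plus; f_equal; ring).
  assert (E2 : exp (- (a * u)) = exp (- (a * v)) * exp (a * (v - u)))
    by (rewrite <- exp_plus; f_equal; ring).
  rewrite E1, E2, (exp_Ropp v), Ev.
  assert (Hd : exp (u - v) = x / (x + 1)).
  { unfold Rminus. rewrite exp_plus, exp_Ropp, Eu, Ev. reflexivity. }
  assert (H1 := exp_ineq1_le (u - v)). rewrite Hd in H1.
  assert (H2 := exp_ineq1_le (a * (v - u))).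
  assert (Hvu : 1 - x / (x + 1) <= v - u) by lra.
  assert (Hq : 1 - x / (x + 1) = / (x + 1)) by (field; lra).
  rewrite Hq in Hvu.
  assert (HE := exp_pos (- (a * v))).
  assert (Hi : 0 < / (x + 1)) by (apply Rinv_0_lt_compat; lra).
  assert (a * / (x+1) <= a * (v - u)) by (apply Rmult_le_compat_l; lra).
  nra.
Qed.
Definition sumR {A : Type} (f : A -> R) (l : list A) : R := fold_right Rplus 0 (map f l).

Lemma sumR_nil {A} (f : A -> R) : sumR f nil = 0.
Proof. reflexivity. Qed.
Lemma sumR_cons {A} (f : A -> R) x l : sumR f (x :: l) = f x + sumR f l.
Proof. reflexivity. Qed.

Lemma sumR_nonneg {A} (f : A -> R) l : (forall x, 0 <= f x) -> 0 <= sumR f l.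
Proof. intros H; induction l; rewrite ?sumR_cons; [unfold sumR; simpl; lra| specialize (H a); lra]. Qed.

Lemma sumR_le {A} (f g : A -> R) l : (forall x, In x l -> f x <= g x) -> sumR f l <= sumR g l.
Proof.
  induction l as [|a l IH]; intros H; rewrite ?sumR_cons; [unfold sumR; simpl; lra|].
  assert (f a <= g a) by (apply H; left; auto).
  assert (sumR f l <= sumR g l) by (apply IH; intros; apply H; right; auto). lra.
Qed.

Lemma sumR_ext {A} (f g : A -> R) l : (forall x, In x l -> f x = g x) -> sumR f l = sumR g l.
Proof. intros H; apply Rle_antisym; apply sumR_le; intros x Hx; rewrite (H x Hx); lra. Qed.

Lemma sumR_app {A} (f : A -> R) l1 l2 : sumR f (l1 ++ l2) = sumR f l1 + sumR f l2.
Proof. induction l1; rewrite ?sumR_cons; simpl app; rewrite ?sumR_cons; [unfold sumR; simpl; lra| lra]. Qed.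

Lemma sumR_plus {A} (f g : A -> R) l : sumR (fun x => f x + g x) l = sumR f l + sumR g l.
Proof. induction l; rewrite ?sumR_cons; [unfold sumR; simpl; lra| lra]. Qed.

Lemma sumR_scal {A} (f : A -> R) c l : sumR (fun x => c * f x) l = c * sumR f l.
Proof. induction l; rewrite ?sumR_cons; [unfold sumR; simpl; lra| rewrite IHl; ring]. Qed.

Lemma sumR_scal_r {A} (f : A -> R) c l : sumR (fun x => f x * c) l = sumR f l * c.
Proof. induction l; rewrite ?sumR_cons; [unfold sumR; simpl; lra| rewrite IHl; ring]. Qed.

Lemma sumR_map {A B} (f : B -> R) (g : A -> B) l : sumR f (map g l) = sumR (fun x => f (g x)) l.
Proof. unfold sumR; rewrite map_map; reflexivity. Qed.

Lemma sumR_swap {A B} (F : A -> B -> R) xs ys :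
  sumR (fun x => sumR (F x) ys) xs = sumR (fun y => sumR (fun x => F x y) xs) ys.
Proof.
  induction xs as [|a xs IH]; rewrite ?sumR_cons.
  - rewrite sumR_nil. symmetry. induction ys; rewrite ?sumR_cons; [reflexivity| rewrite IHys, sumR_nil; ring].
  - rewrite IH. rewrite <- sumR_plus. apply sumR_ext. intros; rewrite sumR_cons; reflexivity.
Qed.

Lemma sumR_sub {A} (f : A -> R) l1 l2 : (forall x, 0 <= f x) -> NoDup l1 -> incl l1 l2 ->
  sumR f l1 <= sumR f l2.
Proof.
  intros Hf H1; revert l2; induction H1 as [|a l1 Ha Hn IH]; intros l2 Hi.
  - rewrite sumR_nil; apply sumR_nonneg; auto.
  - destruct (in_split a l2 (Hi a (or_introl eq_refl))) as [x [y ->]].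
    rewrite sumR_cons, sumR_app, sumR_cons.
    assert (sumR f l1 <= sumR f (x ++ y)).
    { apply IH. intros z Hz. assert (In z (x ++ a :: y)) by (apply Hi; right; auto).
      apply in_app_or in H. apply in_or_app. destruct H as [H|[H|H]]; auto.
      subst; contradiction. }
    rewrite sumR_app in H. lra.
Qed.

Lemma Rpower_pos x b : 0 < Rpower x b.
Proof. unfold Rpower; apply exp_pos. Qed.

Lemma tail_bound (a : R) : 0 < a -> forall K x, 0 < x ->
  sumR (fun k => / Rpower (x + INR k) (a + 1)) (seq 0 K)
  <= / Rpower x (a + 1) + / a * / Rpower x a.
Proof.
  intros Ha K; induction K as [|K IH]; intros x Hx.
  - simpl seq; rewrite sumR_nil. assert (H1 := Rpower_pos x (a+1)). assert (H2 := Rpower_pos x a).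
    assert (0 < / Rpower x (a+1)) by (apply Rinv_0_lt_compat; auto).
    assert (0 < / a * / Rpower x a) by (apply Rmult_lt_0_compat; apply Rinv_0_lt_compat; auto).
    lra.
  - change (seq 0 (S K)) with (0%nat :: seq 1 K). rewrite <- seq_shift, sumR_cons, sumR_map.
    rewrite (sumR_ext _ (fun k => / Rpower ((x + 1) + INR k) (a + 1))).
    2:{ intros k _. rewrite S_INR. f_equal. f_equal. ring. }
    specialize (IH (x + 1) ltac:(lra)).
    assert (B := bernoulli a x Ha Hx).
    simpl INR. rewrite Rplus_0_r.
    assert (/ a * (a * / Rpower (x + 1) (a + 1) + / Rpower (x + 1) a) <= / a * / Rpower x a).
    { apply Rmult_le_compat_l; [left; apply Rinv_0_lt_compat; auto| auto]. }
    assert (/ a * (a * / Rpower (x + 1) (a + 1)) = / Rpower (x + 1) (a + 1)) by (assert (Rpower (x+1) (a+1) > 0) by apply Rpower_pos; field; lra).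
    rewrite Rmult_plus_distr_l in H. rewrite H0 in H. lra.
Qed.

Lemma geom (s : C) (k : nat) : Re s <= 0 ->
  (Cmod s + INR k) / 2 <= Cmod (s - RtoC (INR k)).
Proof.
  intros Hs.
  assert (H1 : Cmod s <= Cmod (s - RtoC (INR k))).
  { unfold Cmod. apply sqrt_le_1_alt. destruct s as [x y]. simpl in *.
    assert (0 <= INR k) by apply pos_INR. nra. }
  assert (H2 : INR k <= Cmod (s - RtoC (INR k))).
  { eapply Rle_trans; [|apply re_le_Cmod]. destruct s as [x y]; simpl in *.
    assert (0 <= INR k) by apply pos_INR. rewrite Rabs_left1; lra. }
  lra.
Qed.

Lemma Rpower_1_base y : Rpower 1 y = 1.
Proof. unfold Rpower; rewrite ln_1, Rmult_0_r; apply exp_0. Qed.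

Lemma T_bound_nz (a : R) (s : C) (K : nat) : 0 < a -> s <> 0%C -> Re s <= 0 ->
  sumR (fun k => / Rpower (Cmod (s - RtoC (INR k))) (a + 1)) (seq 0 K)
  <= Rpower 2 (a + 1) * (/ Rpower (Cmod s) (a + 1) + / a * / Rpower (Cmod s) a).
Proof.
  intros Ha Hs Hre.
  assert (Hr : 0 < Cmod s) by (apply Cmod_gt_0; auto).
  eapply Rle_trans.
  - apply (sumR_le _ (fun k => Rpower 2 (a + 1) * / Rpower (Cmod s + INR k) (a + 1))).
    intros k _.
    assert (Hk : 0 <= INR k) by apply pos_INR.
    assert (G := geom s k Hre).
    assert (P : Rpower ((Cmod s + INR k) / 2) (a + 1) * Rpower 2 (a + 1) = Rpower (Cmod s + INR k) (a + 1)).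
    { rewrite Rpower_mult_distr; [f_equal; field| lra | lra]. }
    assert (L : Rpower ((Cmod s + INR k) / 2) (a + 1) <= Rpower (Cmod (s - RtoC (INR k))) (a + 1)).
    { apply Rle_Rpower_l; lra. }
    assert (P1 := Rpower_pos ((Cmod s + INR k) / 2) (a + 1)).
    assert (P2 := Rpower_pos 2 (a + 1)).
    rewrite <- P, Rinv_mult, (Rmult_comm (/ _)), <- Rmult_assoc, Rinv_r, Rmult_1_l by lra.
    apply Rinv_le_contravar; auto.
  - rewrite sumR_scal. apply Rmult_le_compat_l; [left; apply Rpower_pos|].
    apply tail_bound; auto.
Qed.

Lemma T_bound_0 (a : R) (K : nat) : 0 < a ->
  sumR (fun k => / Rpower (Cmod (0 - RtoC (INR k))) (a + 1)) (seq 0 K)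
  <= / Rpower (Cmod 0) (a + 1) + (1 + / a).
Proof.
  intros Ha. destruct K as [|K].
  - simpl seq; rewrite sumR_nil.
    assert (0 < / Rpower (Cmod 0) (a + 1)) by (apply Rinv_0_lt_compat, Rpower_pos).
    assert (0 < / a) by (apply Rinv_0_lt_compat; auto). lra.
  - change (seq 0 (S K)) with (0%nat :: seq 1 K). rewrite <- seq_shift, sumR_cons, sumR_map.
    replace (0 - RtoC (INR 0))%C with (RtoC 0).
    2:{ simpl INR. unfold Cminus, Copp, Cplus, RtoC; simpl; f_equal; ring. }
    rewrite (sumR_ext _ (fun k => / Rpower (1 + INR k) (a + 1))).
    2:{ intros k _. f_equal. f_equal.
        replace (0 - RtoC (INR (S k)))%C with (RtoC (- INR (S k))).
        2:{ unfold Cminus, Copp, Cplus, RtoC; simpl; f_equal; ring. }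
        rewrite Cmod_R, Rabs_left1, S_INR; [ring|]. assert (H := pos_INR (S k)). lra. }
    assert (B := tail_bound a Ha K 1 ltac:(lra)).
    rewrite !Rpower_1_base, Rinv_1, Rmult_1_r in B. lra.
Qed.

Lemma sumZ_abs {A} (g : A -> Z) l :
  IZR (Z.abs (fold_right Z.add 0%Z (map g l))) <= sumR (fun k => IZR (Z.abs (g k))) l.
Proof.
  induction l as [|x l IH]; [rewrite sumR_nil; simpl; right; reflexivity|].
  rewrite sumR_cons. simpl map; simpl fold_right.
  eapply Rle_trans; [apply IZR_le, Z.abs_triangle|]. rewrite plus_IZR. lra.
Qed.

Lemma fold_zero {A} (g : A -> Z) l : (forall x, In x l -> g x = 0%Z) ->
  fold_right Z.add 0%Z (map g l) = 0%Z.
Proof.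
  induction l as [|x l IH]; intros H; [reflexivity|]. simpl.
  rewrite H by (left; auto). rewrite IH; auto. intros; apply H; right; auto.
Qed.

Lemma max_bound (l : list C) : forall rho, In rho l ->
  (shift_bound rho <= fold_right Nat.max 0%nat (map shift_bound l))%nat.
Proof.
  induction l as [|x l IH]; intros rho H; [destruct H|]. simpl.
  destruct H as [->|H]; [apply Nat.le_max_l|]. eapply Nat.le_trans; [apply IH; auto| apply Nat.le_max_r].
Qed.

Theorem proposition2p5 (f : C -> C) (alpha : R) :
  0 < alpha ->
  meromorphic f ->
  LLD_fun f ->
  has_exponent_of_convergence (Div f) alpha ->
  LLD_div (shifted_divisor (Div f)) /\
  has_exponent_of_convergence (shifted_divisor (Div f)) (alpha + 1).
Proof.
  intros Ha _ Hlld [M HM].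
  set (n := Div f).
  assert (Hre : forall s, n s <> 0%Z -> Re s <= 0).
  { intros s Hs. destruct (Rle_lt_dec (Re s) 0) as [H|H]; auto.
    exfalso; apply Hs; apply Hlld; auto. }
  split.
  - intros rho Hne. destruct (Rle_lt_dec (Re rho) 0) as [H|H]; auto.
    exfalso; apply Hne. unfold shifted_divisor. rewrite fold_zero; [reflexivity|].
    intros k _. apply Hlld. destruct rho as [x y]; unfold Re, Cplus, RtoC in *; simpl in *. assert (H0 := pos_INR k). lra.
  - set (M1 := Rmax 1 M).
    assert (Hlow : forall s : C, s <> 0%C -> n s <> 0%Z -> / Rpower (Cmod s) alpha <= M1).
    { intros s Hs Hn. specialize (HM (s :: nil)).
      assert (HH : IZR (Z.abs (n s)) / Rpower (Cmod s) alpha + 0 <= M).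
      { apply HM. constructor; [intros []| constructor]. intros r [<-|[]]; auto. }
      assert (Z1 : 1 <= IZR (Z.abs (n s))).
      { apply IZR_le. lia. }
      assert (P := Rpower_pos (Cmod s) alpha).
      assert (P' : 0 < / Rpower (Cmod s) alpha) by (apply Rinv_0_lt_compat; auto).
      unfold Rdiv in HH.
      assert (/ Rpower (Cmod s) alpha <= IZR (Z.abs (n s)) * / Rpower (Cmod s) alpha) by nra.
      unfold M1. assert (M <= Rmax 1 M) by apply Rmax_r. lra. }
    assert (HM1 : 0 < M1) by (unfold M1; assert (H := Rmax_l 1 M); lra).
    set (C1 := exp (ln M1 / alpha)).
    assert (Hinv : forall s : C, s <> 0%C -> n s <> 0%Z -> / Cmod s <= C1).
    { intros s Hs Hn. assert (Hr : 0 < Cmod s) by (apply Cmod_gt_0; auto).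
      assert (H := Hlow s Hs Hn). unfold Rpower in H. rewrite inv_exp in H.
      assert (H2 : - (alpha * ln (Cmod s)) <= ln M1).
      { rewrite <- (ln_exp (- (alpha * ln (Cmod s)))). apply ln_le; auto. apply exp_pos. }
      rewrite <- (exp_ln (Cmod s)) by auto. rewrite inv_exp. unfold C1. apply exp_le_mono.
      apply (Rmult_le_reg_l alpha); auto. replace (alpha * (ln M1 / alpha)) with (ln M1) by (field; lra).
      lra. }
    set (Cc := Rpower 2 (alpha + 1) * (C1 + / alpha)).
    set (C0 := / Rpower (Cmod 0) (alpha + 1) + (1 + / alpha)).
    exists (IZR (Z.abs (n 0%C)) * C0 + Cc * M).
    intros l Hnd Hnz.
    set (K := fold_right Nat.max 0%nat (map shift_bound l)).
    set (ks := seq 0 (S K)).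
    set (F := fun (s : C) (k : nat) => IZR (Z.abs (n s)) * / Rpower (Cmod (s - RtoC (INR k))) (alpha + 1)).
    change (sumR (fun rho => IZR (Z.abs (shifted_divisor n rho)) / Rpower (Cmod rho) (alpha + 1)) l
       <= IZR (Z.abs (n 0%C)) * C0 + Cc * M).
    eapply Rle_trans with (sumR (fun rho => sumR (fun k => F (rho + RtoC (INR k))%C k) ks) l).
    { apply sumR_le. intros rho Hin.
      rewrite (sumR_ext _ (fun k => IZR (Z.abs (n (rho + RtoC (INR k))%C)) * / Rpower (Cmod rho) (alpha + 1))).
      2:{ intros k _. unfold F. do 4 f_equal. field. }
      rewrite sumR_scal_r. unfold Rdiv. apply Rmult_le_compat_r; [left; apply Rinv_0_lt_compat, Rpower_pos|].
      unfold shifted_divisor. rewrite Z.abs_opp.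
      eapply Rle_trans; [apply sumZ_abs|].
      assert (HB := max_bound l rho Hin). fold K in HB.
      unfold ks. replace (S K) with (S (shift_bound rho) + (K - shift_bound rho))%nat by lia.
      rewrite seq_app, sumR_app.
      assert (0 <= sumR (fun k => IZR (Z.abs (n (rho + RtoC (INR k))%C))) (seq (0 + S (shift_bound rho)) (K - shift_bound rho))).
      { apply sumR_nonneg. intros; apply IZR_le; lia. }
      lra. }
    rewrite sumR_swap.
    set (S0 := nodup Ceq_dec (flat_map (fun k => map (fun rho => (rho + RtoC (INR k))%C) l) ks)).
    assert (HF : forall s k, 0 <= F s k).
    { intros s k. unfold F. apply Rmult_le_pos; [apply IZR_le; lia| left; apply Rinv_0_lt_compat, Rpower_pos]. }
    eapply Rle_trans with (sumR (fun k => sumR (fun s => F s k) S0) ks).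
    { apply sumR_le. intros k Hk. rewrite <- (sumR_map (fun s => F s k) (fun rho => (rho + RtoC (INR k))%C)).
      apply sumR_sub; auto.
      - apply Injective_map_NoDup; auto. intros x y Hxy.
        replace x with ((x + RtoC (INR k)) - RtoC (INR k))%C by field.
        rewrite Hxy. field.
      - intros s Hs. unfold S0. apply nodup_In. apply in_flat_map. exists k; auto. }
    rewrite <- sumR_swap.
    set (g := fun s => sumR (F s) ks).
    set (S' := filter (fun s => if Ceq_dec s 0%C then false else true) S0).
    assert (Hg : forall s, 0 <= g s) by (intros; apply sumR_nonneg; auto).
    eapply Rle_trans with (sumR g (@cons C (RtoC 0) S')).
    { apply sumR_sub; auto. apply NoDup_nodup.
      intros s Hs. destruct (Ceq_dec s 0%C) as [->|Hne]; [left; auto| right].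
      unfold S'. apply filter_In. split; auto. destruct (Ceq_dec s 0%C); [contradiction|auto]. }
    rewrite sumR_cons.
    assert (G0 : g 0%C <= IZR (Z.abs (n 0%C)) * C0).
    { unfold g, F. rewrite sumR_scal. apply Rmult_le_compat_l; [apply IZR_le; lia|].
      apply T_bound_0; auto. }
    assert (GS : sumR g S' <= Cc * M).
    { eapply Rle_trans with (sumR (fun s => Cc * (IZR (Z.abs (n s)) / Rpower (Cmod s) alpha)) S').
      - apply sumR_le. intros s Hs. unfold S' in Hs. apply filter_In in Hs. destruct Hs as [_ Hs].
        destruct (Ceq_dec s 0%C) as [_|Hs0]; [discriminate|].
        unfold g, F. rewrite sumR_scal.
        destruct (Z.eq_dec (n s) 0%Z) as [E|E].
        + rewrite E. simpl. lra.
        + assert (T := T_bound_nz alpha s (S K) Ha Hs0 (Hre s E)).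
          fold ks in T.
          assert (Hr : 0 < Cmod s) by (apply Cmod_gt_0; auto).
          assert (Ei : / Rpower (Cmod s) (alpha + 1) = / Rpower (Cmod s) alpha * / Cmod s).
          { rewrite Rpower_plus, Rpower_1 by auto. apply Rinv_mult. }
          assert (HI := Hinv s Hs0 E).
          assert (Pa : 0 < / Rpower (Cmod s) alpha) by (apply Rinv_0_lt_compat, Rpower_pos).
          assert (T2 : Rpower 2 (alpha + 1) * (/ Rpower (Cmod s) (alpha + 1) + / alpha * / Rpower (Cmod s) alpha)
                       <= Cc * / Rpower (Cmod s) alpha).
          { unfold Cc. rewrite Ei. rewrite Rmult_assoc. apply Rmult_le_compat_l; [left; apply Rpower_pos|].
            nra. }
          unfold Rdiv. rewrite (Rmult_comm Cc), Rmult_assoc.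
          apply Rmult_le_compat_l; [apply IZR_le; lia|]. rewrite (Rmult_comm _ Cc). lra.
      - rewrite sumR_scal. apply Rmult_le_compat_l.
        + unfold Cc. apply Rmult_le_pos; [left; apply Rpower_pos|].
          assert (0 < C1) by apply exp_pos. assert (0 < / alpha) by (apply Rinv_0_lt_compat; auto). lra.
        + apply HM. unfold S'. apply NoDup_filter, NoDup_nodup.
          intros s Hs. apply filter_In in Hs. destruct Hs as [_ Hs].
          destruct (Ceq_dec s 0%C); [discriminate|auto]. }
    lra.
Qed.
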